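(* Let $q=p^n$, $p>2$ prime, $g\ge1$ with $\gcd(p,g)=1$, and let $C: y^2=x^{2g+1}+ax^{g+1}+bx$ be a genus $g$ hyperelliptic curve over $\mathbb{F}_q$ ($b\ne0$). Let $m=\frac{p-1}{2}$, let $W=(w_{i,j}(a,b))_{1\le i,j\le g}$ be the Cartier–Manin matrix of $C$, and fix $\sqrt b\in\mathbb{F}_{q^2}$. Then for $1\le i,j\le g$: 1. if $ip-j\equiv m\pmod g$, then $$w_{i,j}(a,b)=\sqrt{b}^{\,2m+\frac{m-(ip-j)}{g}}\; w_{i,j}\!\left(\tfrac{a}{\sqrt b},1\right)=\sqrt{b}^{\,2m+\frac{m-(ip-j)}{g}}\;P_{\frac{ip-j}{g}-\frac{p-1}{2g}}\!\left(-\frac{a}{2\sqrt b}\right),$$ where $w_{i,j}(\frac{a}{\sqrt b},1)$ denotes the corresponding entry of the Cartier–Manin matrix of $y^2=x^{2g+1}+\frac{a}{\sqrt b}x^{g+1}+x$, and the equality holds in $\mathbb{F}_{q^2}$ (and the value lies in $\mathbb{F}_q$); 2. otherwise $w_{i,j}(a,b)=0$.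
   Context: For a hyperelliptic curve $y^2=f(x)$ with $f$ monic of degree $2g+1$ over a field of characteristic $p>2$, write $f(x)^{(p-1)/2}=\sum_k c_k x^k$; the Cartier–Manin matrix is $W=(w_{i,j})_{1\le i,j\le g}$ with $w_{i,j}=c_{ip-j}$. $P_n$ denotes the $n$-th Legendre polynomial (its coefficients have only powers of 2 in denominators, so it is reduced modulo $p$). The notation $\sqrt b^{\,e}$ means the $e$-th power of the fixed element $\sqrt b$ (here $e$ is an integer). *)

(* Defs.v *)
From HB Require Import structures.
From mathcomp Require Import all_boot all_order all_algebra all_field.
Set Implicit Arguments. Unset Strict Implicit. Unset Printing Implicit Defensive.
Import Order.TTheory GRing.Theory Num.Theory.
Local Open Scope ring_scope.

Definition hyp_poly (F : fieldType) (g : nat) (a b : F) : {poly F} :=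
  'X^(2 * g + 1)%N + a *: 'X^(g + 1)%N + b *: 'X.

(* Cartier--Manin matrix of y^2 = f(x) in characteristic p, genus g:
   W = (w_{i,j})_{1<=i,j<=g}, w_{i,j} = c_{ip-j}, where
   f^((p-1)/2) = sum_k c_k x^k (and c_k = 0 for k < 0).
   The matrix entry at (i, j) : 'I_g x 'I_g is w_{i+1, j+1}. *)
Definition cm_entry (F : fieldType) (p : nat) (f : {poly F}) (i j : nat) : F :=
  if (j <= i * p)%N then (f ^+ ((p - 1)%N./2))`_(i * p - j) else 0.

Definition cartier_manin (F : fieldType) (p g : nat) (f : {poly F}) : 'M[F]_g :=
  \matrix_(i < g, j < g) cm_entry p f i.+1 j.+1.

(* n-th Legendre polynomial, via the classical explicit formula
   P_n(x) = 2^(-n) sum_{k=0}^n C(n,k)^2 (x-1)^(n-k) (x+1)^k,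
   whose only denominators are powers of 2; over a field of characteristic
   p > 2 this is the reduction of P_n modulo p. *)
Definition legendre (F : fieldType) (n : nat) : {poly F} :=
  (2 ^+ n)^-1 *: \sum_(k < n.+1)
     ('C(n, k) ^ 2)%:R *: (('X - 1) ^+ (n - k) * ('X + 1) ^+ k).

(* Main.v *)
Require Import Defs.
From HB Require Import structures.
From mathcomp Require Import all_boot all_order all_algebra all_field.
From mathcomp Require Import ring zify.
Import Order.TTheory GRing.Theory Num.Theory.
Local Open Scope ring_scope.



Section Comb.
Variable R : comNzRingType.
Variables al be : R.

Definition EE (d : nat) (f : nat -> R) : R :=
  \sum_(k < d.+1) f k * (al ^+ (d - k) * be ^+ k).
Definition sh (f : nat -> R) (k : nat) : R := if k is k'.+1 then f k' else 0.

Lemma EE_al d f : f d.+1 = 0 -> al * EE d f = EE d.+1 f.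
Proof.
move=> Hf; rewrite /EE [in RHS]big_ord_recr /= Hf mul0r addr0 mulr_sumr.
apply: eq_bigr => i _ /=.
have hi : (i <= d)%N by rewrite -ltnS.
rewrite (subSn hi) exprS; ring.
Qed.

Lemma EE_be d f : be * EE d f = EE d.+1 (sh f).
Proof.
rewrite /EE [in RHS]big_ord_recl /= mul0r add0r mulr_sumr.
apply: eq_bigr => i _ /=.
rewrite /bump /= add1n subSS exprSr; ring.
Qed.

Lemma EE_D d f g : EE d (fun k => f k + g k) = EE d f + EE d g.
Proof. by rewrite /EE -big_split; apply: eq_bigr => k _; rewrite mulrDl. Qed.
Lemma EE_B d f g : EE d (fun k => f k - g k) = EE d f - EE d g.
Proof. by rewrite /EE -sumrB; apply: eq_bigr => k _; rewrite mulrBl. Qed.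
Lemma EE_Z d c f : EE d (fun k => c * f k) = c * EE d f.
Proof. by rewrite /EE mulr_sumr; apply: eq_bigr => k _; rewrite [RHS]mulrA. Qed.

Definition cb (n k : nat) : R := ('C(n, k) ^ 2)%:R.

Lemma cb_big n : cb n n.+1 = 0.
Proof. by rewrite /cb bin_small. Qed.

Lemma binid (n k : nat) :
  (n.+2 * 'C(n.+2, k.+2) ^ 2 + n.+1 * ('C(n, k.+2) ^ 2 + 'C(n, k) ^ 2)
  = (2 * n + 3) * ('C(n.+1, k.+2) ^ 2 + 'C(n.+1, k.+1) ^ 2)
    + 2 * n.+1 * 'C(n, k.+1) ^ 2)%N.
Proof.
rewrite !binS.
set a := 'C(n, k); set b := 'C(n, k.+1); set c := 'C(n, k.+2).
have R1 := mul_bin_left n k. have R2 := mul_bin_left n k.+1.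
rewrite -/a -/b -/c in R1 R2.
case: (leqP n k) => hk.
  have hb : b = 0%N by rewrite /b bin_small // ltnS.
  have hc : c = 0%N by rewrite /c bin_small // ltnS ltnW.
  rewrite hb hc; lia.
have [w hw] : exists w, n = (k.+1 + w)%N by exists (n - k.+1)%N; lia.
have e1 : (n - k = w.+1)%N by lia.
have e2 : (n - k.+1 = w)%N by lia.
rewrite e1 in R1; rewrite e2 in R2.
subst n.
have H1 := congr1 (muln (b+c)) R1.
have H2 := congr1 (muln (a+b)) R2.
nia.
Qed.

Lemma eq_by (x y u v : R) : x = y -> u - v = x - y -> u = v.
Proof. by move=> -> /eqP; rewrite subrr subr_eq0 => /eqP. Qed.

Lemma pointwise n k :
  (n.+2)%:R * cb n.+2 k = (2 * n + 3)%:R * (cb n.+1 k + sh (cb n.+1) k)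
     - (n.+1)%:R * (cb n k - 2 * sh (cb n) k + sh (sh (cb n)) k).
Proof.
rewrite /cb; case: k => [|[|k]] /=.
- rewrite !bin0 !exp1n; ring.
- rewrite ?bin1 ?bin0 ?exp1n. ring.
- have H := congr1 (fun x => x%:R : R) (binid n k).
  eapply eq_by; [exact: H|]. ring.
Qed.

Lemma Srec n :
  (n.+2)%:R * EE n.+2 (cb n.+2) = (2 * n + 3)%:R * ((al + be) * EE n.+1 (cb n.+1))
     - (n.+1)%:R * ((be - al) ^+ 2 * EE n (cb n)).
Proof.
have c0a : cb n n.+2 = 0 by rewrite /cb bin_small.
have A1 : (al + be) * EE n.+1 (cb n.+1) = EE n.+2 (cb n.+1) + EE n.+2 (sh (cb n.+1)).
  by rewrite mulrDl EE_al ?cb_big // EE_be.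
have e1 : al * (al * EE n (cb n)) = EE n.+2 (cb n) by rewrite EE_al ?cb_big // EE_al.
have e2 : al * (be * EE n (cb n)) = EE n.+2 (sh (cb n)) by rewrite EE_be EE_al //= cb_big.
have e3 : be * (be * EE n (cb n)) = EE n.+2 (sh (sh (cb n))) by rewrite !EE_be.
have A0 : (be - al) ^+ 2 * EE n (cb n) =
   EE n.+2 (cb n) - 2 * EE n.+2 (sh (cb n)) + EE n.+2 (sh (sh (cb n))).
  rewrite -e1 -e2 -e3; ring.
rewrite A1 A0 -!EE_Z -EE_D -!EE_Z -EE_B -EE_D -!EE_Z -EE_B.
by apply: eq_bigr => k _; rewrite pointwise.
Qed.
End Comb.




Arguments EE {R}.
Arguments Srec {R}.
Arguments eq_by {R}.
Section Leg.
Variable F : fieldType.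
Hypothesis two_nz : (2 : F) != 0.

Lemma leg_eval n (x : F) :
  (legendre F n).[x] = (2 ^+ n)^-1 * EE (x - 1) (x + 1) n (cb F n).
Proof.
rewrite /legendre hornerZ horner_sum; congr (_ * _).
apply: eq_bigr => k _.
by rewrite hornerZ hornerM !horner_exp !hornerE.
Qed.

Lemma leg_rec (x : F) n :
  (n.+2)%:R * (legendre F n.+2).[x] =
   (2 * n + 3)%:R * x * (legendre F n.+1).[x] - (n.+1)%:R * (legendre F n).[x].
Proof.
have h2n : forall k, (2 : F) ^+ k != 0 by move=> k; rewrite expf_neq0.
have H := Srec (x - 1) (x + 1) n.
rewrite !leg_eval.
apply: (mulfI (h2n n.+2)).
eapply eq_by; [exact: H|].
rewrite !exprS. field.
by rewrite h2n two_nz.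
Qed.

Lemma leg0 (x : F) : (legendre F 0).[x] = 1.
Proof. by rewrite leg_eval /EE big_ord1 /cb /= expr0 invr1 bin0 subnn !expr0 !mul1r. Qed.

Lemma leg1 (x : F) : (legendre F 1).[x] = x.
Proof.
rewrite leg_eval /EE !big_ord_recr big_ord0 /cb /=.
rewrite bin0 bin1 /=. field. by [].
Qed.
End Leg.



Section Coef.
Variable F : fieldType.
Variable m : nat.
Hypothesis mpos : (0 < m)%N.
Hypothesis char0 : (2 * m + 1)%:R = 0 :> F.
Variable c : F.

Definition QQ : {poly F} := 'X^2 + c *: 'X + 1.
Definition hh (t : nat) : F := (QQ ^+ m)`_t.

Lemma poly_id : 2 *: (QQ * (QQ ^+ m)^`()) + QQ^`() * QQ ^+ m = 0.
Proof.
rewrite deriv_exp.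
have e : QQ * (QQ^`() * QQ ^+ m.-1 *+ m) = QQ^`() * QQ ^+ m *+ m.
  by rewrite mulrnAr mulrCA -exprS prednK.
rewrite e.
have -> : (2 : F) = 2%:R by [].
rewrite scaler_nat -mulrnA -mulrSr.
rewrite -mulr_natr -polyC_natr -addn1 mulnC char0.
by rewrite mulr0.
Qed.

Lemma coef_expand i :
  2 * (('X^2 * (QQ ^+ m)^`())`_i + c * ('X * (QQ ^+ m)^`())`_i + ((QQ ^+ m)^`())`_i)
  + ('X * QQ ^+ m)`_i *+ 2 + c * hh i = 0.
Proof.
have Hc := congr1 (fun q : {poly F} => q`_i) poly_id.
rewrite coef0 /= /hh in Hc *.
have d1 : (1 : {poly F})^`() = 0 by rewrite -polyC1 derivC.
set D := (QQ ^+ m)^`() in Hc *; set H := QQ ^+ m in Hc *.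
rewrite /QQ !mulrDl -!scalerAl mul1r in Hc.
rewrite !derivD derivXn derivZ derivX d1 addr0 expr1 in Hc.
rewrite !mulrDl -scalerAl mul1r in Hc.
rewrite !coefD !coefZ in Hc.
rewrite -[RHS]Hc !coefD !coefZ; ring.
Qed.

Lemma hh0 : hh 0 = 1.
Proof. by rewrite /hh -horner_coef0 horner_exp /QQ !hornerE expr2 mul0r add0r expr1n. Qed.

Lemma hh1e : 2 * hh 1 + c * hh 0 = 0.
Proof.
have := coef_expand 0; rewrite coefXnM coefXM coef_deriv coefXM /=.
move=> H; eapply eq_by; [exact: H|]; rewrite sub0n /hh; ring.
Qed.

Lemma hhSe n : 2 * (hh n *+ n + c * (hh n.+1 *+ n.+1) + hh n.+2 *+ n.+2)
   + hh n *+ 2 + c * hh n.+1 = 0.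
Proof.
have := coef_expand n.+1; rewrite coefXnM coefXM !coef_deriv coefXM /=.
have -> : (if (n.+1 < 2)%N then 0 else (QQ ^+ m)`_(n.+1 - 2).+1 *+ (n.+1 - 2).+1) = hh n *+ n.
  case: n => [|n] //=.
  by rewrite !subSS subn0.
move=> H; eapply eq_by; [exact: H|]; rewrite /hh; ring.
Qed.

Hypothesis two_nz : (2 : F) != 0.

Lemma hh1 : hh 1 = - (c / 2).
Proof.
have H := hh1e; rewrite hh0 in H.
apply: (mulfI two_nz); eapply eq_by; [exact: H|]; field; exact: two_nz.
Qed.

Lemma hh_rec n :
  (n.+2)%:R * hh n.+2 = (2 * n + 3)%:R * (- (c / 2)) * hh n.+1 - (n.+1)%:R * hh n.
Proof.
apply: (mulfI two_nz); eapply eq_by; [exact: (hhSe n)|]; field; exact: two_nz.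
Qed.
End Coef.



Lemma uniq_rec (F : fieldType) (x : F) (N : nat) (h u : nat -> F) :
  h 0 = u 0 -> h 1 = u 1 ->
  (forall n, (n.+2)%:R * h n.+2 = (2 * n + 3)%:R * x * h n.+1 - (n.+1)%:R * h n) ->
  (forall n, (n.+2)%:R * u n.+2 = (2 * n + 3)%:R * x * u n.+1 - (n.+1)%:R * u n) ->
  (forall n, (n.+2 <= N)%N -> (n.+2)%:R != 0 :> F) ->
  forall t, (t <= N)%N -> h t = u t.
Proof.
move=> h0 h1 hr ur nz.
have key : forall n, (n.+1 <= N)%N -> h n = u n /\ h n.+1 = u n.+1.
  elim=> [|n IH] hn; first by split.
  have [e1 e2] := IH (ltnW hn).
  split=> //.
  apply: (mulfI (nz n hn)); rewrite hr ur e1 e2 //.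
case=> [|t] ht; first by [].
by case: (key t ht).
Qed.

Lemma hh_leg (F : fieldType) (m : nat) (c : F) :
  (0 < m)%N -> (2 * m + 1)%:R = 0 :> F -> (2 : F) != 0 ->
  (forall n, (n.+2 <= 2 * m)%N -> (n.+2)%:R != 0 :> F) ->
  forall t, (t <= 2 * m)%N -> hh F m c t = (legendre F t).[- (c / 2)].
Proof.
move=> mpos ch tw nz.
apply: uniq_rec (nz).
- by rewrite hh0 leg0.
- by rewrite hh1 // leg1.
- by move=> n; apply: hh_rec.
- by move=> n; apply: leg_rec.
Qed.



Lemma hyp_fact (F : fieldType) g (a b : F) :
  hyp_poly g a b = 'X * (('X^2 + a *: 'X + b%:P) \Po 'X^g).
Proof.
rewrite /hyp_poly !comp_polyD comp_polyZ comp_polyX comp_polyC.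
rewrite (rmorphXn (comp_poly 'X^g)) /= comp_polyX !mulrDr.
congr (_ + _ + _).
- by rewrite -exprM mulnC addn1 exprS.
- by rewrite -scalerAr addn1 exprS.
- by rewrite mulrC mul_polyC.
Qed.

Lemma cm_coef (F : fieldType) p g (a b : F) i j : (0 < g)%N ->
  cm_entry p (hyp_poly g a b) i j =
  if (j <= i * p)%N then
    (if (i * p - j < (p - 1) %/ 2)%N then 0
     else if (g %| i * p - j - (p - 1) %/ 2)%N then
       (('X^2 + a *: 'X + b%:P) ^+ ((p - 1) %/ 2))`_((i * p - j - (p - 1) %/ 2) %/ g)
     else 0)
  else 0.
Proof.
move=> gpos; rewrite /cm_entry divn2 hyp_fact exprMn.
rewrite -(rmorphXn (comp_poly 'X^g)) /= coefXnM.
by rewrite coef_comp_poly_Xn.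
Qed.

Lemma coef_compZX (F : fieldType) (P : {poly F}) (d : F) t :
  (P \Po (d *: 'X))`_t = d ^+ t * P`_t.
Proof.
rewrite comp_polyE coef_sum.
rewrite (eq_bigr (fun i : 'I_(size P) => if (i == t :> nat) then d ^+ t * P`_t else 0)).
  rewrite -big_mkcond (big_ord1_eq _ (fun _ => d ^+ t * P`_t)).
  case: ltnP => // ht.
  by rewrite nth_default // mulr0.
move=> i _; rewrite exprZn coefZ coefZ coefXn.
case: eqP => [->|ne]; first by rewrite eqxx mulr1 mulrC.
by case: eqP => // e; [case: ne; rewrite e | rewrite !mulr0].
Qed.

Lemma scale_Q (F : fieldType) (A s : F) m t : s != 0 -> (t <= 2 * m)%N ->
  (('X^2 + A *: 'X + (s ^+ 2)%:P) ^+ m)`_t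
  = s ^+ (2 * m - t) * (('X^2 + (A / s) *: 'X + 1) ^+ m)`_t.
Proof.
move=> snz ht.
have e : 'X^2 + A *: 'X + (s ^+ 2)%:P =
   s ^+ 2 *: (('X^2 + (A / s) *: 'X + 1) \Po (s^-1 *: 'X)).
  rewrite !comp_polyD comp_polyZ comp_polyX -polyC1 comp_polyC.
  rewrite (rmorphXn (comp_poly _)) /= comp_polyX.
  rewrite !scalerDr exprZn !scalerA -exprMn divff // expr1n scale1r.
  have -> : s ^+ 2 * (A / s) / s = A by field.
  by congr (_ + _); rewrite polyC1 -mul_polyC mulr1.
rewrite e exprZn -(rmorphXn (comp_poly _)) /= coefZ coef_compZX.
rewrite -exprM mulrA; congr (_ * _).
rewrite -(subnK ht) exprD exprVn mulfK ?expf_neq0 //.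
by rewrite subnK.
Qed.



Theorem theorem4 (p n g : nat) (K L : finFieldType) (phi : {rmorphism K -> L})
  (a b : K) (s : L) :
  prime p -> (2 < p)%N -> p \in [pchar K] -> #|K| = (p ^ n)%N ->
  (0 < g)%N -> coprime p g ->
  b != 0 -> separable_poly (hyp_poly g a b) ->
  #|L| = (#|K| ^ 2)%N -> s ^+ 2 = phi b ->
  let m := ((p - 1) %/ 2)%N in
  let W := cartier_manin p g (hyp_poly g a b) in
  forall i j : 'I_g,
    let k : int := ((i.+1 * p)%:Z - (j.+1)%:Z)%R in
    ((g%:Z %| k - m%:Z)%Z ->
       phi (W i j) = s ^ (2 * m%:Z + ((m%:Z - k) %/ g%:Z)%Z)
                       * cartier_manin p g (hyp_poly g (phi a / s) 1) i j
     /\ phi (W i j) = s ^ (2 * m%:Z + ((m%:Z - k) %/ g%:Z)%Z)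
                       * (legendre L ((i.+1 * p - j.+1 - m) %/ g)).[- (phi a / (2 * s))])
    /\ (~~ (g%:Z %| k - m%:Z)%Z -> W i j = 0).
Proof.
move=> pr p2 chK cardK gpos cop bnz sep cardL hs m W i j k.
have chL := rmorph_pchar phi chK.
have hp : p = (2 * m + 1)%N.
  case: (even_prime pr) => [e|op]; first by rewrite e in p2.
  have e : (p./2).*2.+1 = p by rewrite -[RHS](odd_double_half p) op add1n.
  have em : m = p./2 by rewrite /m -{1}e subn1 /= divn2 doubleK.
  by rewrite em -{1}e -mul2n addn1.
have mpos : (0 < m)%N by lia.
have ch0 : (2 * m + 1)%:R = 0 :> L by rewrite -hp (pcharf0 chL).
have two_nz : (2 : L) != 0.
  apply/negP => /eqP h2.
  have : (p %| 2)%N by rewrite (dvdn_pcharf chL); apply/eqP.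
  move/dvdn_leq => /(_ isT); lia.
have nz : forall n, (n.+2 <= 2 * m)%N -> (n.+2)%:R != 0 :> L.
  move=> n0 hn; rewrite -(dvdn_pcharf chL); apply/negP => /dvdn_leq => /(_ isT); lia.
have snz : s != 0.
  apply/eqP => s0; move: hs; rewrite s0 expr2 mul0r => /esym/eqP.
  by rewrite fmorph_eq0 (negbTE bnz).
have hP : (p <= i.+1 * p)%N by rewrite leq_pmull.
have hPg : (i.+1 * p <= g * p)%N by rewrite leq_mul2r ltn_ord orbT.
have hj : (j.+1 <= g)%N := ltn_ord j.
rewrite /W !mxE !cm_coef // -/m.
split.
  move=> hd; case/dvdzP: (hd) => q hq.
  rewrite /k in hq.
  have q0 : (0 <= q)%R by nia.
  have [t ht] : exists t : nat, q = t%:Z by exists `|q|%N; rewrite gez0_abs.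
  subst q.
  have hjP : (j.+1 <= i.+1 * p)%N by lia.
  have hN : (i.+1 * p - j.+1 = m + t * g)%N by lia.
  have ht2 : (t <= 2 * m)%N by nia.
  rewrite hjP hN ltnNge leq_addr /= addKn dvdn_mull // mulnK //.
  have ex : (2 * m%:Z + ((m%:Z - k) %/ g%:Z)%Z) = (2 * m - t)%N :> int.
    have -> : m%:Z - k = (- t%:Z) * g%:Z by rewrite /k mulNr -hq; lia.
    rewrite mulzK //; lia.
  rewrite ex -exprnP -coef_map rmorphXn /= !rmorphD /= map_polyXn map_polyZ map_polyX.
  rewrite map_polyC /= -hs scale_Q // polyC1.
  split=> //.
  congr (_ * _).
  have -> : (('X^2 + (phi a / s) *: 'X + 1) ^+ m)`_t = hh L m (phi a / s) t by [].
  rewrite hh_leg //; congr (horner _ _).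
  field.
  by rewrite snz two_nz.
move=> nd.
case: ifP => // hjP; case: ifP => // hlt; case: ifP => // hdv.
exfalso; move/negP: nd; apply.
have hmN : (m <= i.+1 * p - j.+1)%N by rewrite leqNgt hlt.
have -> : k - m%:Z = (i.+1 * p - j.+1 - m)%N%:Z by rewrite /k; lia.
by rewrite dvdzE /= hdv.
Qed.
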